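(* Let $0\le x<1$, $0<\beta<1$ and $\frac{(1+\beta)^2x}{4\beta}>1$. Then $$\lim_{t\to\infty}\frac{\beta}{(1+\beta)\sqrt{1-x}}\left({}_2F_1\!\left(\begin{matrix}1,(1+\beta)t\\ t+1\end{matrix};\tfrac12-\tfrac12\sqrt{1-x}\right)-{}_2F_1\!\left(\begin{matrix}1,(1+\beta)t\\ t+1\end{matrix};\tfrac12+\tfrac12\sqrt{1-x}\right)\right)=-\frac{1}{\frac{(1+\beta)^2}{4\beta}x-1},$$ uniformly on compact subsets of this region.
   Context: ${}_2F_1\!\left(\begin{matrix}a,b\\ d\end{matrix};x\right)=\sum_{n\ge0}\frac{(a)_n(b)_n}{(d)_n}\frac{x^n}{n!}$ for $|x|<1$, with $(q)_0=1$, $(q)_n=q(q+1)\cdots(q+n-1)$; $t>0$ is a real parameter tending to $\infty$. *)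

(* Defs.v *)
From mathcomp Require Import all_boot all_order all_algebra.
From mathcomp Require Import all_classical all_reals all_analysis.
Set Implicit Arguments. Unset Strict Implicit. Unset Printing Implicit Defensive.
Import Order.TTheory GRing.Theory Num.Theory.
Local Open Scope ring_scope.

Definition poch {R : realType} (q : R) (n : nat) : R :=
  \prod_(i < n) (q + i%:R).

(* Gauss hypergeometric function 2F1(a,b;d;x) as the sum of its power series
   (used only for |x| < 1, where it converges). *)
Definition hyp2F1 {R : realType} (a b d x : R) : R :=
  limn (fun N : nat => \sum_(0 <= n < N)
          (poch a n * poch b n / poch d n * x ^+ n / (n`!)%:R)).

(* Main.v *)
Require Import Defs.
From mathcomp Require Import all_boot all_order all_algebra.
From mathcomp Require Import all_classical all_reals all_analysis.
From mathcomp Require Import ring lra.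
Import Order.TTheory GRing.Theory Num.Theory numFieldNormedType.Exports.
Local Open Scope ring_scope.
Local Open Scope classical_set_scope.

Section Ser.
Variable R : realType.

Lemma pochS (q : R) n : poch q n.+1 = poch q n * (q + n%:R).
Proof. by rewrite /poch big_ord_recr. Qed.

Lemma poch0 (q : R) : poch q 0 = 1.
Proof. by rewrite /poch big_ord0. Qed.

Lemma poch1 n : poch (1 : R) n = (n`!)%:R.
Proof.
elim: n => [|n IH]; first by rewrite poch0.
by rewrite pochS IH factS natrM mulrC -natr1 addrC.
Qed.

Lemma poch_gt0 (q : R) n : 0 < q -> 0 < poch q n.
Proof.
move=> q0; elim: n => [|n IH]; first by rewrite poch0.
by rewrite pochS mulr_gt0 // ltr_wpDr.
Qed.

Definition aa (b t z : R) n := poch (b * t) n / poch (t + 1) n * z ^+ n.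
Definition SS b t z N := \sum_(0 <= n < N) aa b t z n.
Definition WW b t z N := \sum_(0 <= n < N) n%:R * aa b t z n.

Lemma hypE b t z : hyp2F1 1 (b * t) (t + 1) z = limn (SS b t z).
Proof.
rewrite /hyp2F1; congr (lim (_ @ \oo)); apply: funext => N; rewrite /SS.
apply: eq_bigr => n _; rewrite poch1 /aa.
have nz : (n`!)%:R != 0 :> R by rewrite pnatr_eq0 -lt0n fact_gt0.
move: (n`!%:R : R) nz => f fz; move: (poch _ _) (poch _ _) => P Q.
rewrite (_ : f * Q / P * z ^+ n / f = Q / P * z ^+ n * (f / f)); last by ring.
by rewrite divff // mulr1.
Qed.

Lemma aa0 b t z : aa b t z 0 = 1.
Proof. by rewrite /aa !poch0 expr0 divr1 mulr1. Qed.

Lemma aaS b t z n : 0 < t ->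
  aa b t z n.+1 = aa b t z n * ((b * t + n%:R) * z / (t + 1 + n%:R)).
Proof.
move=> t0; rewrite /aa !pochS exprS.
have h1 : poch (t + 1) n != 0 by rewrite gt_eqF // poch_gt0 // ltr_wpDr.
have h2 : t + 1 + n%:R != 0 by rewrite gt_eqF // ltr_wpDr // ltr_wpDr.
move: h1 h2; move: (poch (b * t) n) (poch (t + 1) n) (t + 1 + n%:R) => P Q D h1 h2.
by field; rewrite h1 h2.
Qed.

Lemma aa_bnd b t z n : 0 < t -> 1 <= b -> 0 <= z ->
  0 <= aa b t z n <= (b * z) ^+ n.
Proof.
move=> t0 b1 z0; elim: n => [|n IH]; first by rewrite aa0 expr0 lexx ler01.
case/andP: IH => h1 h2.
have d0 : 0 < t + 1 + n%:R by rewrite ltr_wpDr // ltr_wpDr.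
have r0 : 0 <= (b * t + n%:R) * z / (t + 1 + n%:R).
  apply: divr_ge0; last exact: ltW.
  have n0 : 0 <= n%:R :> R by [].
  apply: mulr_ge0 => //; nra.
have r1 : (b * t + n%:R) * z / (t + 1 + n%:R) <= b * z.
  rewrite ler_pdivrMr //.
  have n0 : 0 <= n%:R :> R by [].
  have b0 : 0 <= b - 1 by lra.
  have := mulr_ge0 (mulr_ge0 b0 z0) n0.
  have := mulr_ge0 b0 z0.
  nra.
rewrite aaS // exprS; apply/andP; split; first exact: mulr_ge0.
rewrite mulrC; apply: ler_pM => //.
Qed.

Lemma sumS (F : nat -> R) N : \sum_(0 <= n < N.+1) F n = \sum_(0 <= n < N) F n + F N.
Proof. by rewrite big_nat_recr. Qed.

Lemma sum0 (F : nat -> R) : \sum_(0 <= n < 0) F n = 0.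
Proof. by rewrite big_geq. Qed.

Lemma geo1 (q : R) N : (1 - q) * \sum_(0 <= n < N) q ^+ n = 1 - q ^+ N.
Proof.
elim: N => [|N IH]; first by rewrite sum0 expr0; ring.
by rewrite sumS mulrDr IH exprS; ring.
Qed.

Lemma geo2 (q : R) N : (1 - q) ^+ 2 * \sum_(0 <= n < N) n%:R * q ^+ n
   = q - N%:R * q ^+ N + (N%:R - 1) * q ^+ N.+1.
Proof.
elim: N => [|N IH]; first by rewrite sum0 expr0 expr1; ring.
by rewrite sumS mulrDr IH !exprS -natr1; ring.
Qed.

Lemma geo1_le (q : R) N : 0 <= q < 1 -> \sum_(0 <= n < N) q ^+ n <= (1 - q)^-1.
Proof.
case/andP=> q0 q1; have h : 0 < 1 - q by lra.
rewrite -(ler_pM2l h) mulfV ?gt_eqF // geo1; have := exprn_ge0 N q0; lra.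
Qed.

Lemma geo2_le (q : R) N : 0 <= q < 1 ->
  \sum_(0 <= n < N) n%:R * q ^+ n <= ((1 - q) ^+ 2)^-1.
Proof.
case/andP=> q0 q1; have h : 0 < (1 - q) ^+ 2 by rewrite exprn_gt0 //; lra.
rewrite -(ler_pM2l h) mulfV ?gt_eqF // geo2.
have e := exprn_ge0 N q0.
have n0 : 0 <= N%:R :> R by [].
rewrite exprS.
have : 0 <= q ^+ N * (N%:R * (1 - q)) by apply: mulr_ge0 => //; apply: mulr_ge0 => //; lra.
nra.
Qed.

Lemma recid b t z N : 0 < t ->
  t * (SS b t z N.+1 - 1 - b * z * SS b t z N) = z * WW b t z N - WW b t z N.+1.
Proof.
move=> t0; elim: N => [|N IH].
  by rewrite /SS /WW !sumS !sum0 aa0; ring.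
have e : t * (SS b t z N.+2 - 1 - b * z * SS b t z N.+1) =
  t * (SS b t z N.+1 - 1 - b * z * SS b t z N) + t * (aa b t z N.+1 - b * z * aa b t z N).
  by rewrite /SS (sumS _ N.+1) (sumS _ N); ring.
rewrite e IH /WW (sumS _ N.+1) (sumS _ N) aaS //.
have h2 : t + 1 + N%:R != 0 by rewrite gt_eqF // ltr_wpDr // ltr_wpDr.
rewrite -natr1; move: h2; move: (aa b t z N) (\sum_(0 <= n < N) n%:R * aa b t z n) => A W h2.
by field.
Qed.


Lemma key (b t z : R) : 1 <= b -> 0 < t -> 0 <= z -> b * z < 1 ->
  `|hyp2F1 1 (b * t) (t + 1) z - (1 - b * z)^-1| <= ((1 - b * z) ^+ 3 * t)^-1.
Proof.
move=> b1 t0 z0 q1.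
have q0 : 0 <= b * z by apply: mulr_ge0 => //; lra.
have zq : z <= b * z by nra.
set q := b * z in q0 q1 zq *.
have hq : 0 <= q < 1 by rewrite q0 q1.
set S := SS b t z.
have aP n := aa_bnd b t z n t0 b1 z0.
have Sinc : nondecreasing_seq S.
  apply/nondecreasing_seqP => n; rewrite /S /SS sumS lerDl.
  by case/andP: (aP n).
have Sub : has_ubound (range S).
  exists (1 - q)^-1 => _ [n _ <-].
  apply: le_trans (geo1_le q n hq); rewrite /S /SS.
  by apply: ler_sum => i _; case/andP: (aP i).
have Scv : cvgn S by exact: nondecreasing_is_cvgn.
rewrite hypE -/S.
set F := limn S.
have vcv : (fun N => S N.+1 - q * S N) @ \oo --> F - q * F.
  apply: cvgB; first by rewrite (cvg_shiftS S).
  by apply: cvgM; [exact: cvg_cst|exact: Scv].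
set c := (((1 - q) ^+ 2) * t)^-1.
have vb N : `|S N.+1 - q * S N - 1| <= c.
  have e := recid b t z N t0.
  have W0 : 0 <= WW b t z N.
    rewrite /WW; apply: sumr_ge0 => i _; apply: mulr_ge0 => //.
    by case/andP: (aP i).
  have W1 : WW b t z N <= WW b t z N.+1.
    rewrite /WW sumS lerDl; apply: mulr_ge0 => //; by case/andP: (aP N).
  have W2 : WW b t z N.+1 <= ((1 - q) ^+ 2)^-1.
    apply: le_trans (geo2_le q N.+1 hq); rewrite /WW.
    apply: ler_sum => i _; apply: ler_wpM2l => //; by case/andP: (aP i).
  have zW : 0 <= z * WW b t z N <= WW b t z N.+1.
    rewrite mulr_ge0 //=; apply: le_trans W1; rewrite ler_piMl //; lra.
  have h : `|t * (S N.+1 - 1 - q * S N)| <= ((1 - q) ^+ 2)^-1.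
    rewrite e /S; apply: le_trans W2; rewrite ler_norml; apply/andP; split; lra.
  rewrite normrM gtr0_norm // in h.
  rewrite /c invfM ler_pdivlMr ?invr_gt0 // ?invrK.
  by rewrite (_ : S N.+1 - q * S N - 1 = S N.+1 - 1 - q * S N) ?(mulrC _ t) //; ring.
have lo : 1 - c <= F - q * F.
  apply: (cvgr_to_ge vcv); apply: nearW => N.
  have := vb N; rewrite ler_norml => /andP[h1 h2]; lra.
have hi : F - q * F <= 1 + c.
  apply: (cvgr_to_le vcv); apply: nearW => N.
  have := vb N; rewrite ler_norml => /andP[h1 h2]; lra.
have p1 : 0 < 1 - q by lra.
have -> : F - (1 - q)^-1 = (F - q * F - 1) / (1 - q).
  by field; rewrite gt_eqF.
have -> : ((1 - q) ^+ 3 * t)^-1 = c / (1 - q).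
  by rewrite /c; field; rewrite gt_eqF // gt_eqF.
rewrite normrM (gtr0_norm (x := (1 - q)^-1)) ?invr_gt0 //.
rewrite ler_pM2r ?invr_gt0 // ler_norml; apply/andP; split; lra.
Qed.


Lemma invle (y z : R) : 0 < z -> z <= y -> y^-1 <= z^-1.
Proof.
move=> z0 zy; have y0 : 0 < y by apply: lt_le_trans zy.
by rewrite lef_pV2 ?posrE.
Qed.

Lemma pointwise (x beta t m1 m2 : R) : 0 < m1 -> 0 < m2 ->
  m1 <= 1 - x -> m2 <= (1 + beta) ^+ 2 * x / 4 - beta -> 0 <= x ->
  0 < beta < 1 -> 0 < t ->
  `| beta / ((1 + beta) * Num.sqrt (1 - x)) *
         (hyp2F1 1 ((1 + beta) * t) (t + 1) (2^-1 - 2^-1 * Num.sqrt (1 - x))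
          - hyp2F1 1 ((1 + beta) * t) (t + 1) (2^-1 + 2^-1 * Num.sqrt (1 - x)))
       - (- 1 / ((1 + beta) ^+ 2 / (4 * beta) * x - 1)) |
  <= 2 / (m1 * m2 ^+ 3 * t).
Proof.
move=> m10 m20 hm1 hm2 x0 /andP[be0 be1] t0.
set s := Num.sqrt (1 - x).
have hx1 : 0 < 1 - x by lra.
have ss : s ^+ 2 = 1 - x by rewrite sqr_sqrtr // ltW.
have s0 : 0 < s by rewrite sqrtr_gt0.
have ss' : s * s = 1 - x by rewrite -expr2.
have s1 : s <= 1.
  rewrite leNgt; apply/negP => h.
  have := ltr_pM (ler01) (ler01) h h; rewrite mulr1 ss'; lra.
have sm : m1 <= s by have := ler_piMl (ltW s0) s1; lra.
have hx : x = 1 - s ^+ 2 by lra.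
set D := (1 + beta) ^+ 2 * x / 4 - beta.
set b := 1 + beta.
set zm := 2^-1 - 2^-1 * s.
set zp := 2^-1 + 2^-1 * s.
have zm0 : 0 <= zm by rewrite /zm; lra.
have zp0 : 0 <= zp by rewrite /zp; lra.
have b1 : 1 <= b by rewrite /b; lra.
have prod : (1 - b * zp) * (1 - b * zm) = D.
  by rewrite /D hx /b /zp /zm; field.
have sum : (1 - b * zp) + (1 - b * zm) = 1 - beta.
  by rewrite /b /zp /zm; field.
have hD : m2 <= D by [].
have D0 : 0 < D by lra.
have qm0 : 0 <= b * zm by apply: mulr_ge0 => //; lra.
have qpm : b * zm <= b * zp by rewrite ler_pM2l ?(lt_le_trans ltr01) // /zm /zp; lra.
have qp1 : b * zp < 1 by nra.
have qm1 : b * zm < 1 by lra.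
have Dp : D <= 1 - b * zp by nra.
have Dm : D <= 1 - b * zm by lra.
have em := key b t zm b1 t0 zm0 qm1.
have ep := key b t zp b1 t0 zp0 qp1.
rewrite -/s -/b -/zm -/zp.
set Fm := hyp2F1 1 (b * t) (t + 1) zm.
set Fp := hyp2F1 1 (b * t) (t + 1) zp.
fold Fm in em; fold Fp in ep.
have bnd (q : R) : D <= 1 - q -> ((1 - q) ^+ 3 * t)^-1 <= (m2 ^+ 3 * t)^-1.
  move=> hq; apply: invle; first by rewrite mulr_gt0 // exprn_gt0.
  rewrite ler_pM2r //; apply: lerXn2r; rewrite ?nnegrE; lra.
have em' := le_trans em (bnd _ Dm).
have ep' := le_trans ep (bnd _ Dp).
have iden : beta / (b * s) * ((1 - b * zm)^-1 - (1 - b * zp)^-1)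
            = - 1 / (b ^+ 2 / (4 * beta) * x - 1).
  have An : 1 - b * zm != 0 by rewrite gt_eqF //; lra.
  have Bn : 1 - b * zp != 0 by rewrite gt_eqF //; lra.
  have e1 : (1 - b * zm)^-1 - (1 - b * zp)^-1 = - (b * s) / D.
    rewrite -prod; move: An Bn; rewrite /zm /zp => An Bn; field.
    have -> : 2 - b * (1 - s) = 2 * (1 - b * zm) by rewrite /zm; field.
    have -> : 2 - b * (1 + s) = 2 * (1 - b * zp) by rewrite /zp; field.
    by rewrite !mulf_neq0.
  have e2 : b ^+ 2 / (4 * beta) * x - 1 = D / beta.
    by rewrite /D /b; field; rewrite gt_eqF.
  rewrite e1 e2.
  have sn : s != 0 by rewrite gt_eqF.
  have bn : b != 0 by rewrite gt_eqF //; lra.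
  have Dn : D != 0 by rewrite gt_eqF.
  have ben : beta != 0 by rewrite gt_eqF.
  by field; rewrite ben Dn sn bn.
have -> : beta / (b * s) * (Fm - Fp) - (- 1 / (b ^+ 2 / (4 * beta) * x - 1))
   = beta / (b * s) * ((Fm - (1 - b * zm)^-1) - (Fp - (1 - b * zp)^-1)).
  by rewrite -iden; ring.
have cb : 0 <= beta / (b * s) <= m1^-1.
  rewrite divr_ge0 ?mulr_ge0 //=; try lra.
  rewrite ler_pdivrMr ?mulr_gt0 //; try lra.
  rewrite mulrC ler_pdivlMr //.
  have : 0 <= (s - m1) * beta by apply: mulr_ge0; lra.
  have : 0 <= s * (b - beta) by apply: mulr_ge0; rewrite /b; lra.
  nra.
case/andP: cb => cb0 cb1.
rewrite normrM ger0_norm //.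
have : `|(Fm - (1 - b * zm)^-1) - (Fp - (1 - b * zp)^-1)| <= 2 * (m2 ^+ 3 * t)^-1.
  by apply: le_trans (ler_normB _ _) _; lra.
move=> hE.
have -> : 2 / (m1 * m2 ^+ 3 * t) = m1^-1 * (2 * (m2 ^+ 3 * t)^-1).
  by field; rewrite !gt_eqF ?exprn_gt0.
apply: ler_pM => //.
Qed.


Lemma posmin (K : set (R * R)) (f : R * R -> R) : compact K -> continuous f ->
  (forall p, K p -> 0 < f p) -> exists2 m, 0 < m & forall p, K p -> m <= f p.
Proof.
move=> cK cf fp.
have [K0|/set0P [p0 Kp0]] := eqVneq K set0.
  by exists 1 => // p; rewrite K0.
have [c cK' hc] := compact_EVT_min (ex_intro _ p0 Kp0) cK (continuous_subspaceT cf).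
exists (f c); first by apply: fp; rewrite -inE.
by move=> p Kp; apply: hc; rewrite inE.
Qed.

End Ser.

Theorem corollary2 (R : realType) (K : set (R * R)) :
  compact K ->
  K `<=` [set p | 0 <= p.1 < 1 /\ 0 < p.2 < 1 /\
                  1 < (1 + p.2) ^+ 2 * p.1 / (4 * p.2)] ->
  forall eps : R, 0 < eps ->
  exists T : R, forall t : R, T < t -> forall p, K p ->
    let x := p.1 in let beta := p.2 in
    `| beta / ((1 + beta) * Num.sqrt (1 - x)) *
         (hyp2F1 1 ((1 + beta) * t) (t + 1) (2^-1 - 2^-1 * Num.sqrt (1 - x))
          - hyp2F1 1 ((1 + beta) * t) (t + 1) (2^-1 + 2^-1 * Num.sqrt (1 - x)))
       - (- 1 / ((1 + beta) ^+ 2 / (4 * beta) * x - 1)) | < eps.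
Proof.
move=> cK sub eps e0.
have c1 : continuous (fun p : R * R => 1 - p.1).
  move=> p; apply: cvgB; [exact: cvg_cst|exact: cvg_fst].
have c2 : continuous (fun p : R * R => (1 + p.2) ^+ 2 * p.1 / 4 - p.2).
  move=> p; apply: cvgB; last exact: cvg_snd.
  apply: cvgM; last exact: cvg_cst.
  apply: cvgM; last exact: cvg_fst.
  by rewrite expr2; apply: cvgM; (apply: cvgD; [exact: cvg_cst|exact: cvg_snd]).
have [m1 m10 hm1] := @posmin R K _ cK c1 (fun p Kp => ltac:(
  have [/andP[_ h] _] := sub p Kp; rewrite /=; lra)).
have [m2 m20 hm2] := @posmin R K _ cK c2 (fun p Kp => ltac:(
  have [_ [/andP[b0 _] h]] := sub p Kp; rewrite /=;
  rewrite ltr_pdivlMr ?mulr_gt0 // mul1r in h; lra)).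
have M0 : 0 < m1 * m2 ^+ 3 * eps by rewrite !mulr_gt0 // exprn_gt0.
exists (2 / (m1 * m2 ^+ 3 * eps)) => t tT p Kp /=.
have T0 : 0 < 2 / (m1 * m2 ^+ 3 * eps) by rewrite divr_gt0.
have t0 : 0 < t by apply: lt_trans tT.
have [/andP[x0 _] [hb _]] := sub p Kp.
apply: le_lt_trans (@pointwise R p.1 p.2 t m1 m2 m10 m20 (hm1 p Kp) (hm2 p Kp) x0 hb t0) _.
rewrite ltr_pdivrMr ?mulr_gt0 ?exprn_gt0 //.
rewrite ltr_pdivrMr // in tT.
have -> : eps * (m1 * m2 ^+ 3 * t) = t * (m1 * m2 ^+ 3 * eps) by ring.
exact: tT.
Qed.
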